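(* For all instances $A_1,\dots,A_n$ (over a common schema), the class $\bigcup_{1\le i\le n}[A_i]_{\leftrightarrow}$ admits a left query algorithm over $\mathbb{B}$ (equivalently, is FO-definable) if and only if each $[A_i]_{\leftrightarrow}$, $1\le i\le n$, admits a left query algorithm over $\mathbb{B}$ (equivalently, is FO-definable).
   Context: A schema is a finite set of relation symbols, each with a positive arity. An instance $A$ over a schema $\sigma$ assigns to each $R\in\sigma$ of arity $r$ a finite $r$-ary relation $R^A$; $\mathrm{adom}(A)$ is the set of elements occurring in its facts. A homomorphism $h:A\to B$ is a map $h:\mathrm{adom}(A)\to\mathrm{adom}(B)$ preserving every relation; we write $A\to B$ if one exists. $A,B$ are homomorphically equivalent if $A\to B$ and $B\to A$; $[A]_{\leftrightarrow}$ is the class of all instances homomorphically equivalent to $A$. $\hom_{\mathbb{B}}(A,B)=1$ if $A\to B$ and $0$ otherwise; for $\mathcal{F}=\{F_1,\dots,F_k\}$, $\hom_{\mathbb{B}}(\mathcal{F},A)=(\hom_{\mathbb{B}}(F_i,A))_{i\le k}$. A left $k$-query algorithm over $\mathbb{B}$ for a class $\mathcal{C}$ (closed under isomorphism) is a pair $(\mathcal{F},X)$ with $|\mathcal{F}|=k$ and $X\subseteq\{0,1\}^k$ such that for every instance $D$: $D\in\mathcal{C}$ iff $\hom_{\mathbb{B}}(\mathcal{F},D)\in X$; $\mathcal{C}$ admits one if one exists for some $k>0$. FO-definable means equal to the class of instances satisfying some first-order sentence under active-domain semantics. *)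

(* Defs.v *)
From mathcomp Require Import all_boot.
Set Implicit Arguments. Unset Strict Implicit. Unset Printing Implicit Defensive.

(* An instance assigns to each symbol R a finite (ar R)-ary relation, given as a
   finite list of tuples; elements are drawn from nat (every finite instance is
   isomorphic to one of this form, and all classes considered are closed under
   isomorphism). *)
Definition instance (S : finType) (ar : S -> nat) :=
  forall R : S, seq ((ar R).-tuple nat).

Section Defs.
Variables (S : finType) (ar : S -> nat).

Definition fact (A : instance ar) (R : S) (t : (ar R).-tuple nat) : Prop :=
  t \in A R.

Definition adom (A : instance ar) : pred nat :=
  fun a => [exists R : S, has (fun t : (ar R).-tuple nat => a \in val t) (A R)].

(* A map nat -> nat
   preserving facts restricts to a map adom A -> adom B (images of facts are
   facts of B), and any map adom A -> adom B extends to nat. *)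
Definition hom (A B : instance ar) : Prop :=
  exists h : nat -> nat,
    forall (R : S) (t : (ar R).-tuple nat), fact A t -> fact B (map_tuple h t).

Definition hom_equiv (A B : instance ar) : Prop := hom A B /\ hom B A.

Definition hom_class (A : instance ar) : instance ar -> Prop :=
  fun D => hom_equiv A D.

Definition left_query_alg (k : nat) (F : 'I_k -> instance ar)
    (X : {set {ffun 'I_k -> bool}}) (C : instance ar -> Prop) : Prop :=
  forall D : instance ar,
    C D <-> exists v : {ffun 'I_k -> bool},
              v \in X /\ forall i : 'I_k, (v i = true <-> hom (F i) D).

Definition admits_left_query_alg (C : instance ar -> Prop) : Prop :=
  exists k : nat, 0 < k /\
    exists (F : 'I_k -> instance ar) (X : {set {ffun 'I_k -> bool}}),
      left_query_alg F X C.

End Defs.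

(* Main.v *)
Require Import Defs.
From mathcomp Require Import all_boot.
From Stdlib Require Import ClassicalEpsilon.
Set Implicit Arguments. Unset Strict Implicit.

Definition pb (P : Prop) : bool := if excluded_middle_informative P then true else false.
Lemma pbP (P : Prop) : pb P = true <-> P.
Proof. by rewrite /pb; case: excluded_middle_informative. Qed.

Section L.
Variables (S : finType) (ar : S -> nat).

Lemma hom_refl (A : instance ar) : hom A A.
Proof.
exists id => R t H; suff -> : map_tuple id t = t by [].
by apply: val_inj; rewrite /= map_id.
Qed.

Lemma hom_trans (A B C : instance ar) : hom A B -> hom B C -> hom A C.
Proof.
move=> [h1 H1] [h2 H2]; exists (h2 \o h1) => R t H.
have := H2 _ _ (H1 _ _ H).
suff -> : map_tuple (h2 \o h1) t = map_tuple h2 (map_tuple h1 t) by [].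
by apply: val_inj; rewrite /= map_comp.
Qed.

Definition vec k (F : 'I_k -> instance ar) D : {ffun 'I_k -> bool} :=
  [ffun j => pb (hom (F j) D)].

Lemma lqa_vec k (F : 'I_k -> instance ar) X C :
  left_query_alg F X C <-> forall D, C D <-> vec F D \in X.
Proof.
have uniq : forall D (v : {ffun 'I_k -> bool}),
   (forall i, v i = true <-> hom (F i) D) -> v = vec F D.
  move=> D v Hv; apply/ffunP => i; rewrite ffunE.
  case E: (v i); case E2: (pb _) => //.
  - by move: E2 => /negbT/negP; case; apply/pbP/Hv.
  - by move: E => /negbT/negP; case; apply/Hv/pbP.
split=> H D; rewrite H.
  split; first by move=> [v [Hv Hi]]; rewrite -(uniq _ _ Hi).
  by move=> Hx; exists (vec F D); split=> // i; rewrite ffunE pbP.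
split; last by move=> [v [Hv Hi]]; rewrite -(uniq _ _ Hi).
by move=> Hx; exists (vec F D); split=> // i; rewrite ffunE pbP.
Qed.

Definition cat k1 k2 (F1 : 'I_k1 -> instance ar) (F2 : 'I_k2 -> instance ar)
  (j : 'I_(k1 + k2)) : instance ar :=
  match split j with inl a => F1 a | inr b => F2 b end.

Definition lpart k1 k2 (w : {ffun 'I_(k1+k2) -> bool}) : {ffun 'I_k1 -> bool} :=
  [ffun a => w (unsplit (inl a))].
Definition rpart k1 k2 (w : {ffun 'I_(k1+k2) -> bool}) : {ffun 'I_k2 -> bool} :=
  [ffun b => w (unsplit (inr b))].

Lemma lpart_vec k1 k2 F1 F2 D : lpart (vec (@cat k1 k2 F1 F2) D) = vec F1 D.
Proof. by apply/ffunP => a; rewrite !ffunE /cat unsplitK. Qed.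
Lemma rpart_vec k1 k2 F1 F2 D : rpart (vec (@cat k1 k2 F1 F2) D) = vec F2 D.
Proof. by apply/ffunP => a; rewrite !ffunE /cat unsplitK. Qed.

Lemma lqa_and k1 k2 F1 F2 X1 X2 (C1 C2 : instance ar -> Prop) :
  left_query_alg F1 X1 C1 -> left_query_alg F2 X2 C2 ->
  left_query_alg (@cat k1 k2 F1 F2)
     [set w | (lpart w \in X1) && (rpart w \in X2)] (fun D => C1 D /\ C2 D).
Proof.
move=> /lqa_vec H1 /lqa_vec H2; apply/lqa_vec => D.
rewrite inE lpart_vec rpart_vec H1 H2; split; first by case=> -> ->.
by case/andP.
Qed.

Lemma lqa_or k1 k2 F1 F2 X1 X2 (C1 C2 : instance ar -> Prop) :
  left_query_alg F1 X1 C1 -> left_query_alg F2 X2 C2 ->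
  left_query_alg (@cat k1 k2 F1 F2)
     [set w | (lpart w \in X1) || (rpart w \in X2)] (fun D => C1 D \/ C2 D).
Proof.
move=> /lqa_vec H1 /lqa_vec H2; apply/lqa_vec => D.
rewrite inE lpart_vec rpart_vec H1 H2; split; first by case=> ->; rewrite ?orbT.
by case/orP; [left|right].
Qed.

Lemma admits_ext (C C' : instance ar -> Prop) :
  (forall D, C D <-> C' D) -> admits_left_query_alg C -> admits_left_query_alg C'.
Proof.
move=> E [k [k0 [F [X H]]]]; exists k; split=> //; exists F, X => D.
by rewrite -E.
Qed.

Lemma admits_and (C1 C2 : instance ar -> Prop) : admits_left_query_alg C1 ->
  (exists k F X, @left_query_alg S ar k F X C2) ->
  admits_left_query_alg (fun D => C1 D /\ C2 D).
Proof.
move=> [k1 [k0 [F1 [X1 H1]]]] [k2 [F2 [X2 H2]]].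
exists (k1 + k2); split; first by rewrite addn_gt0 k0.
by eexists; eexists; apply: lqa_and H1 H2.
Qed.

Lemma admits_or (C1 C2 : instance ar -> Prop) : admits_left_query_alg C1 -> admits_left_query_alg C2 ->
  admits_left_query_alg (fun D => C1 D \/ C2 D).
Proof.
move=> [k1 [k0 [F1 [X1 H1]]]] [k2 [_ [F2 [X2 H2]]]].
exists (k1 + k2); split; first by rewrite addn_gt0 k0.
by eexists; eexists; apply: lqa_or H1 H2.
Qed.

Lemma admits_empty (A0 : instance ar) : @admits_left_query_alg S ar (fun _ => False).
Proof.
exists 1; split=> //; exists (fun _ => A0), set0; apply/lqa_vec => D.
by rewrite inE.
Qed.

Lemma admits_seq (I : eqType) (Cf : I -> instance ar -> Prop) (s : seq I) (A0 : instance ar) :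
  (forall i, admits_left_query_alg (Cf i)) ->
  admits_left_query_alg (fun D => exists i, i \in s /\ Cf i D).
Proof.
move=> Hs; elim: s => [|i s IH].
  by apply: admits_ext (admits_empty A0) => D; split=> // [[i []]].
apply: admits_ext (admits_or (Hs i) IH) => D; split.
  by case=> [HC|[j [H1 H2]]]; [exists i; rewrite inE eqxx|exists j; rewrite inE H1 orbT].
by case=> j; rewrite inE => [[/orP[/eqP->|H1] H2]]; [left|right; exists j].
Qed.

End L.

Theorem mainTheorem7 (S : finType) (ar : S -> nat)
    (ar_pos : forall R : S, 0 < ar R)
    (n : nat) (A : 'I_n -> instance ar) :
  admits_left_query_alg (fun D : instance ar => exists i : 'I_n, hom_class (A i) D)
  <-> (forall i : 'I_n, admits_left_query_alg (hom_class (A i))).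
Proof.
split.
  move=> H i.
  pose u := [ffun k => pb (hom (A k) (A i))].
  have H2 : left_query_alg A [set u]
      (fun D => forall k, hom (A k) D <-> hom (A k) (A i)).
    apply/lqa_vec => D; rewrite inE; split.
      move=> Hk; apply/eqP/ffunP => k; rewrite !ffunE.
      case E: (pb (hom (A k) (A i))); case E2: (pb (hom (A k) D)) => //.
        by move: E2 => /negbT/negP; case; apply/pbP/Hk/pbP.
      by move: E => /negbT/negP; case; apply/pbP/Hk/pbP.
    move=> /eqP/ffunP E k; move: (E k); rewrite !ffunE => E'.
    by split=> Hk'; apply/pbP; [rewrite -E'|rewrite E']; apply/pbP.
  have HA := admits_and H (ex_intro _ n (ex_intro _ A (ex_intro _ [set u] H2))).
  apply: (admits_ext _ HA).
  move=> D; split.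
    move=> [[m [Hm1 Hm2]] Hk]; split.
      by apply/(Hk i)/hom_refl.
    by apply: hom_trans Hm2 _; apply/(Hk m).
  move=> [Hi1 Hi2]; split; first by exists i.
  by move=> k; split=> Hk; [apply: hom_trans Hk Hi2|apply: hom_trans Hk Hi1].
move=> H.
case: n A H => [|n] A H.
  exists 1; split=> //; exists (fun _ => fun _ => [::]), set0; apply/lqa_vec => D.
  rewrite inE; split=> //; case=> -[m Hm] _; by rewrite ltn0 in Hm.
have HH := @admits_seq S ar _ (fun i => hom_class (A i)) (enum 'I_n.+1) (A ord0) H.
apply: (admits_ext _ HH) => D; split; first by case=> i [_ Hi]; exists i.
by case=> i Hi; exists i; rewrite mem_enum.
Qed.
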